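(* Assume $\mathfrak b=\aleph_1$ and fix the family $\{g_\alpha:\alpha<\omega_1\}$ as below. Let $G \leq {}^\omega 2$ be a subgroup and let $\langle \mathcal T_\alpha : \alpha<\omega_1\rangle$ satisfy properties (i), (ii), (iii) below. Then it also satisfies property (iv); hence it is a $G$-matrix.
   Context: ${}^\omega 2$ is the Cantor space with bitwise addition modulo $2$. $\mathbb S$ is the set of perfect subtrees of ${}^{<\omega}2$ ordered by inclusion; $[T]$ is the set of branches of $T$; for $x\in{}^\omega 2$, $x+T=\{\sigma+x\restriction|\sigma|:\sigma\in T\}$. A node $\sigma\in T$ is splitting if $\sigma^\frown0,\sigma^\frown1\in T$; $T$ is skew if for each $n$ there is at most one splitting node of length $n$. The splitting predecessors of $s\in T$ are the splitting nodes of $T$ properly contained in $s$; $h_T(n)=\min\{k:\text{some node of }T\text{ of length }k\text{ has }n\text{ splitting predecessors}\}$. $g\le^* f$ means $g(n)\le f(n)$ for almost all $n$. $\{g_\alpha:\alpha<\omega_1\}\subseteq{}^\omega\omega$ is fixed with $\alpha<\beta\Rightarrow g_\alpha\le^* g_\beta$ and such that for every $f\in{}^\omega\omega$ there is $\alpha$ with $g_\alpha\not\le^* f$. For $S,T\in\mathbb S$, $S$ is somewhere dense in $T$ if there is $s\in T$ with $T_s=\{t\in T:t\subseteq s\lor s\subseteq t\}\subseteq S$. A $G$-matrix is a sequence $\langle\mathcal T_\alpha:\alpha<\omega_1\rangle$ with $\mathcal T=\bigcup_\alpha\mathcal T_\alpha$ such that: (i) $\mathcal T\subseteq\mathbb S$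 consists of skew trees; (ii) $g_\alpha\le^* h_T$ for all $T\in\mathcal T_\alpha$; (iii) for all $S\neq T$ in $\mathcal T_\alpha$ and all $x\in G$, $x+S$ and $T$ are incompatible (equivalently $|(x+[S])\cap[T]|\le\aleph_0$); (iv) for every $T\in\mathbb S$ the set $\{(x,S)\in G\times\mathcal T: x+S\text{ is somewhere dense in }T\}$ is at most countable. *)

(* Defs.v *)
From HB Require Import structures.
From mathcomp Require Import all_boot all_order.
From mathcomp Require Import boolp classical_sets cardinality.
Set Implicit Arguments. Unset Strict Implicit. Unset Printing Implicit Defensive.
Local Open Scope classical_set_scope.

(* Cantor space ^omega 2 : nat -> bool, group operation = bitwise xor. *)
Definition cantor := nat -> bool.
Definition cadd (x y : cantor) : cantor := fun n => xorb (x n) (y n).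
Definition czero : cantor := fun _ => false.

(* G is a subgroup of (^omega 2, +). (Every element is its own inverse.) *)
Definition is_subgroup (G : set cantor) : Prop :=
  G czero /\ (forall x y, G x -> G y -> G (cadd x y)).

Definition tree := set (seq bool).

Definition splitting (T : tree) (s : seq bool) : Prop :=
  T (rcons s false) /\ T (rcons s true).

Definition perfect_tree (T : tree) : Prop :=
  [/\ T [::],
      (forall s t, prefix t s -> T s -> T t) &
      (forall s, T s -> exists t, [/\ T t, prefix s t & splitting T t])].

Definition skew (T : tree) : Prop :=
  forall s t, T s -> T t -> splitting T s -> splitting T t ->
    size s = size t -> s = t.

(* number of splitting predecessors of s (splitting nodes properly contained in s) *)
Definition nsplitpred (T : tree) (s : seq bool) : nat :=
  count (fun i => `[< splitting T (take i s) >]) (iota 0 (size s)).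

Definition has_node_with (T : tree) (n k : nat) : Prop :=
  exists s, [/\ T s, size s = k & nsplitpred T s = n].

(* h_T(n) = min{k : some node of T of length k has n splitting predecessors}
   (default 0 if no such k exists, which never happens for perfect T) *)
Definition hT (T : tree) (n : nat) : nat :=
  match pselect (exists k, `[< has_node_with T n k >]) with
  | left H => ex_minn H
  | right _ => 0
  end.

Definition le_star (g f : nat -> nat) : Prop :=
  exists N, forall n, N <= n -> g n <= f n.

Definition addseq (x : cantor) (s : seq bool) : seq bool :=
  [seq xorb (nth false s i) (x i) | i <- iota 0 (size s)].
Definition shift (x : cantor) (T : tree) : tree :=
  [set t | exists2 s, T s & t = addseq x s].

Definition compatible (S T : tree) : Prop :=
  exists R, [/\ perfect_tree R, R `<=` S & R `<=` T].

Definition subtree_at (T : tree) (s : seq bool) : tree :=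
  [set t | T t /\ (prefix t s \/ prefix s t)].

Definition somewhere_dense (S T : tree) : Prop :=
  exists2 s, T s & subtree_at T s `<=` S.

(* (I, lt) is (order-isomorphic to) omega_1: a strict well-order, uncountable,
   all of whose proper initial segments are countable *)
Definition is_omega1 (I : Type) (lt : I -> I -> Prop) : Prop :=
  [/\ (forall a, ~ lt a a),
      (forall a b c, lt a b -> lt b c -> lt a c),
      (forall a b, lt a b \/ a = b \/ lt b a) &
      well_founded lt] /\
  (~ countable (@setT I) /\ (forall a, countable [set b | lt b a])).

Definition scale_family (I : Type) (lt : I -> I -> Prop) (g : I -> nat -> nat) : Prop :=
  (forall a b, lt a b -> le_star (g a) (g b)) /\
  (forall f : nat -> nat, exists a, ~ le_star (g a) f).

Definition union_matrix (I : Type) (M : I -> set tree) : set tree :=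
  [set T | exists a, M a T].

Definition prop_i (I : Type) (M : I -> set tree) : Prop :=
  forall T, union_matrix M T -> perfect_tree T /\ skew T.
Definition prop_ii (I : Type) (g : I -> nat -> nat) (M : I -> set tree) : Prop :=
  forall a T, M a T -> le_star (g a) (hT T).
Definition prop_iii (I : Type) (G : set cantor) (M : I -> set tree) : Prop :=
  forall a S T, M a S -> M a T -> S <> T ->
    forall x, G x -> ~ compatible (shift x S) T.
Definition prop_iv (I : Type) (G : set cantor) (M : I -> set tree) : Prop :=
  forall T, perfect_tree T ->
    countable [set p : cantor * tree |
                 [/\ G p.1, union_matrix M p.2 & somewhere_dense (shift p.1 p.2) T]].

(* Main.v *)
Require Import Defs.
From mathcomp Require Import all_boot all_order.
From mathcomp Require Import boolp classical_sets cardinality.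
Set Implicit Arguments. Unset Strict Implicit. Unset Printing Implicit Defensive.
Local Open Scope classical_set_scope.

Lemma size_addseq x s : size (addseq x s) = size s.
Proof. by rewrite /addseq size_map size_iota. Qed.

Lemma nth_addseq x s i : i < size s ->
  nth false (addseq x s) i = xorb (nth false s i) (x i).
Proof. by move=> hi; rewrite /addseq (nth_map 0) ?size_iota // nth_iota. Qed.

Lemma addseq_nil x : addseq x [::] = [::].
Proof. by []. Qed.

Lemma take_addseq x n s : take n (addseq x s) = addseq x (take n s).
Proof.
apply: (@eq_from_nth _ false); first by rewrite size_addseq !size_take size_addseq.
move=> i; rewrite size_take size_addseq => hi.
have hin : i < n by move: hi; case: ifP => // /negbT; rewrite -leqNgt => h1 h2; exact: leq_trans h2 h1.
have his : i < size s by move: hi; case: ifP => // h1 h2; exact: ltn_trans h2 h1.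
rewrite nth_take // !nth_addseq ?size_take ?nth_take //; by case: ifP.

Qed.

Lemma addseq_rcons x s b :
  addseq x (rcons s b) = rcons (addseq x s) (xorb b (x (size s))).
Proof.
apply: (@eq_from_nth _ false); first by rewrite size_rcons !size_addseq size_rcons.
move=> i; rewrite size_addseq size_rcons ltnS => hi.
rewrite nth_addseq ?size_rcons ?ltnS // !nth_rcons size_addseq.
case: ltngtP hi => // [hlt|heq] _; first by rewrite nth_addseq.
by rewrite heq.
Qed.

Lemma addseq_comp x y s : addseq y (addseq x s) = addseq (cadd x y) s.
Proof.
apply: (@eq_from_nth _ false); first by rewrite !size_addseq.
move=> i; rewrite !size_addseq => hi.
rewrite !nth_addseq ?size_addseq // /cadd.
by case: (nth false s i); case: (x i); case: (y i).
Qed.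

Lemma addseqK x s : addseq x (addseq x s) = s.
Proof.
apply: (@eq_from_nth _ false); first by rewrite !size_addseq.
move=> i; rewrite !size_addseq => hi.
rewrite !nth_addseq ?size_addseq //.
by case: (nth false s i); case: (x i).
Qed.

Lemma prefixT (a b : seq bool) : prefix a b -> take (size a) b = a.
Proof. by rewrite prefixE => /eqP. Qed.

Definition pclosed (T : tree) := forall s t, prefix t s -> T s -> T t.

Lemma splitting_shift (T' S : tree) x s :
  (forall t, T' t -> S (addseq x t)) -> splitting T' s -> splitting S (addseq x s).
Proof.
move=> hs [h0 h1].
have H b : S (rcons (addseq x s) (xorb b (x (size s)))).
  by rewrite -addseq_rcons; apply: hs; case: b.
split.
  by have := H (x (size s)); case: (x (size s)).
by have := H (~~ x (size s)); case: (x (size s)).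
Qed.

Lemma nsplit_take T j u : j <= size u ->
  nsplitpred T (take j u) = count (fun i => `[< splitting T (take i u) >]) (iota 0 j).
Proof.
move=> hj; rewrite /nsplitpred size_takel //; apply: eq_in_count => i.
by rewrite mem_iota add0n => /andP[_ hi]; rewrite take_takel // ltnW.
Qed.

Lemma nsplit_shift_ge (T' S : tree) x t :
  (forall t, T' t -> S (addseq x t)) -> nsplitpred T' t <= nsplitpred S (addseq x t).
Proof.
move=> hs; rewrite /nsplitpred size_addseq; apply: sub_count => i /asboolP h.
by apply/asboolP; rewrite take_addseq; apply: splitting_shift h.
Qed.

Lemma ivt (c : nat -> nat) : c 0 = 0 -> (forall j, c j.+1 <= (c j).+1) ->
  forall L n, n <= c L -> exists j, j <= L /\ c j = n.
Proof.
move=> c0 cS; elim=> [|L IH] n hn.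
  by exists 0; split => //; move: hn; rewrite c0 leqn0 => /eqP ->.
case: (leqP n (c L)) => h.
  by have [j [hj e]] := IH n h; exists j; split => //; exact: leqW.
exists L.+1; split => //; apply/eqP; rewrite eqn_leq hn andbT.
by apply: leq_trans (cS L) _.
Qed.

Lemma cmono (P : pred nat) j k : j <= k -> count P (iota 0 j) <= count P (iota 0 k).
Proof. by move=> h; rewrite -(subnKC h) iotaD count_cat leq_addr. Qed.

Lemma exact_node (S : tree) t n : pclosed S -> S t -> n <= nsplitpred S t ->
  exists u, [/\ S u, size u <= size t & nsplitpred S u = n].
Proof.
move=> pc St hn.
set c := fun j => count (fun i => `[< splitting S (take i t) >]) (iota 0 j).
have c0 : c 0 = 0 by [].
have cS j : c j.+1 <= (c j).+1.
  by rewrite /c -addn1 iotaD count_cat /= add0n addn0 -addn1 leq_add2l; case: (`[< _ >]).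
have [j [hj e]] := ivt c0 cS hn.
exists (take j t); split.
- by apply: (pc t) => //; exact: prefix_take.
- by rewrite size_takel.
- by rewrite nsplit_take.
Qed.

Lemma hT_le (S : tree) u n : pclosed S -> S u -> n <= nsplitpred S u -> hT S n <= size u.
Proof.
move=> pc Su hn; have [u' [Su' su' e]] := exact_node pc Su hn.
rewrite /hT; case: pselect => [H|H] //.
case: ex_minnP => k _ hmin; apply: leq_trans su'; apply: hmin.
by apply/asboolP; exists u'.
Qed.

Lemma hT_spec (T : tree) n : (exists t, T t /\ nsplitpred T t = n) ->
  exists t, [/\ T t, size t = hT T n & nsplitpred T t = n].
Proof.
move=> [t [Tt e]]; rewrite /hT; case: pselect => [H|H].
  by case: ex_minnP => k /asboolP [t' [? ? ?]] _; exists t'.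
by exfalso; apply: H; exists (size t); apply/asboolP; exists t.
Qed.

Lemma perfect_pclosed T : perfect_tree T -> pclosed T.
Proof. by case. Qed.

Lemma perfect_long T : perfect_tree T -> forall m, exists t, T t /\ m <= size t.
Proof.
move=> [h0 hc he]; elim=> [|m [t [Tt hm]]]; first by exists [::].
have [u [Tu pu [su _]]] := he t Tt.
exists (rcons u false); split => //; rewrite size_rcons ltnS.
by apply: leq_trans hm (size_prefix pu).
Qed.

Lemma perfect_split_long T : perfect_tree T -> forall m,
  exists t, [/\ T t, m <= size t & splitting T t].
Proof.
move=> pT m; have [t [Tt hm]] := perfect_long pT m.
case: pT => _ _ he; have [u [Tu pu su]] := he t Tt.
by exists u; split => //; apply: leq_trans hm (size_prefix pu).
Qed.

Lemma take_rcons_size (u : seq bool) b : take (size u) (rcons u b) = u.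
Proof. by rewrite -cats1 take_size_cat. Qed.

Lemma perfect_many T : perfect_tree T -> forall n, exists t, T t /\ n <= nsplitpred T t.
Proof.
move=> pT; elim=> [|n [t [Tt hn]]]; first by case: pT => h0 _ _; exists [::].
case: (pT) => _ _ he; have [u [Tu pu su]] := he t Tt.
have hv : T (rcons u false) by case: su.
exists (rcons u false); split => //.
have -> : nsplitpred T (rcons u false) =
   nsplitpred T u + `[< splitting T u >].
  rewrite {1}/nsplitpred size_rcons -addn1 iotaD count_cat /= add0n addn0.
  rewrite take_rcons_size -nsplit_take ?size_rcons ?leqnSn //.
  by rewrite take_rcons_size.
have -> : `[< splitting T u >] = true by apply/asboolP.
rewrite addn1 ltnS; apply: leq_trans hn _.
have et := prefixT pu.
rewrite -{1}et nsplit_take ?size_prefix //.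
by rewrite /nsplitpred cmono // size_prefix.
Qed.

Lemma prefix_comparable (a b c : seq bool) : prefix a c -> prefix b c ->
  prefix a b \/ prefix b a.
Proof.
move=> /prefixT ea /prefixT eb.
case: (leqP (size a) (size b)) => h.
  left; have -> : a = take (size a) b by rewrite -[b]eb take_takel.
  exact: prefix_take.
right; have -> : b = take (size b) a by rewrite -[a]ea take_takel // ltnW.
exact: prefix_take.
Qed.

Lemma subtree_perfect T s : perfect_tree T -> T s -> perfect_tree (subtree_at T s).
Proof.
move=> [h0 hc he] Ts; split.
- by split => //; left; exact: prefix0s.
- move=> t t' pt' [Tt H]; split; first exact: hc pt' Tt.
  case: H => [pts|pst]; first by left; exact: prefix_trans pt' pts.
  exact: prefix_comparable pt' pst.
- move=> t [Tt pts].
  have [w [Tw psw ptw]] : exists w, [/\ T w, prefix s w & prefix t w].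
    by case: pts => h; [exists s; rewrite prefix_refl | exists t; rewrite prefix_refl].
  have [u [Tu pu [su0 su1]]] := he w Tw.
  exists u; split.
  + by split => //; right; exact: prefix_trans pu.
  + exact: prefix_trans pu.
  + split; (split; [done | right]); apply: prefix_trans (prefix_trans psw pu) _;
      exact: prefix_rcons.
Qed.

Lemma shift_perfect T x : perfect_tree T -> perfect_tree (shift x T).
Proof.
move=> [h0 hc he]; split.
- by exists [::].
- move=> s t pts [sig Ts es]; subst s.
  exists (take (size t) sig); first by apply: hc Ts; exact: prefix_take.
  by rewrite -take_addseq (prefixT pts).
- move=> s [sig Ts ->].
  have [u [Tu pu su]] := he sig Ts.
  exists (addseq x u); split.
  + by exists u.
  + by rewrite -(prefixT pu) -take_addseq prefix_take.
  + by apply: (splitting_shift (T' := T)) => // t Tt; exists t.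
Qed.

Lemma shift_sub (T' S : tree) x : T' `<=` shift x S -> forall t, T' t -> S (addseq x t).
Proof. by move=> h t /h [sig Ss ->]; rewrite addseqK. Qed.

Lemma skew_unique (T' S : tree) x y : perfect_tree T' -> skew S ->
  (forall t, T' t -> S (addseq x t)) -> (forall t, T' t -> S (addseq y t)) -> x = y.
Proof.
move=> pT sk hx hy; apply: funext => i.
have [t [Tt hi st]] := perfect_split_long pT i.+1.
have e : addseq x t = addseq y t.
  apply: sk; try exact: splitting_shift st; [exact: hx | exact: hy |].
  by rewrite !size_addseq.
have := congr1 (fun s => nth false s i) e.
rewrite !nth_addseq //.
by case: (nth false t i); case: (x i); case: (y i).
Qed.

Lemma compat (T' S S' : tree) x y : perfect_tree T' ->
  T' `<=` shift x S -> T' `<=` shift y S' -> compatible (shift (cadd x y) S) S'.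
Proof.
move=> pT hx hy; exists (shift y T'); split.
- exact: shift_perfect.
- move=> r [t /hx [sig Ss ->] ->]; exists sig => //; exact: addseq_comp.
- by move=> r [t Tt ->]; exact: (shift_sub hy).
Qed.

Lemma hT_bound (T' S : tree) x : perfect_tree T' -> perfect_tree S ->
  T' `<=` shift x S -> forall n, hT S n <= hT T' n.
Proof.
move=> pT pS h n.
have [t [Tt hn]] := perfect_many pT n.
have [u [Tu _ eu]] := exact_node (perfect_pclosed pT) Tt hn.
have [t0 [Tt0 st0 e0]] := hT_spec (ex_intro _ u (conj Tu eu)).
rewrite -st0 -(size_addseq x).
apply: hT_le; first exact: perfect_pclosed.
  exact: (shift_sub h).
by rewrite -{1}e0; apply: nsplit_shift_ge; exact: (shift_sub h).
Qed.

Lemma le_star_trans f g h : le_star f g -> le_star g h -> le_star f h.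
Proof.
move=> [N1 h1] [N2 h2]; exists (maxn N1 N2) => n hn.
rewrite geq_max in hn; case/andP: hn => a b.
exact: leq_trans (h1 n a) (h2 n b).
Qed.

Lemma le_star_pt f g h : le_star f g -> (forall n, g n <= h n) -> le_star f h.
Proof. by move=> [N1 h1] hg; exists N1 => n hn; exact: leq_trans (h1 n hn) (hg n). Qed.

Theorem mainTheorem16 (I : Type) (lt : I -> I -> Prop) (g : I -> nat -> nat)
  (G : set cantor) (M : I -> set tree) :
  is_omega1 lt -> scale_family lt g -> is_subgroup G ->
  prop_i M -> prop_ii g M -> prop_iii G M ->
  prop_iv G M.
Proof.
move=> [[irr tr tot wf] [unc segc]] [incr unb] [G0 Gadd] pi pii piii T pT.
set P := [set p : cantor * tree | _].
have key : forall p, exists q : option (seq bool * I), P p ->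
    exists s a, [/\ q = Some (s, a), T s, subtree_at T s `<=` shift p.1 p.2 & M a p.2].
  move=> p; case: (pselect (P p)) => [[Gp [a Ma] [s Ts sub]]|nP].
    by exists (Some (s, a)) => _; exists s, a.
  by exists None.
have [F HF] := choice key.
pose A s := [set a | exists p, P p /\ F p = Some (s, a)].
have cA : forall s, countable (A s).
  move=> s; apply: contrapT => nc.
  have big : forall b, exists a, A s a /\ lt b a.
    move=> b; apply: contrapT => nb; apply: nc.
    have sub : forall a, A s a -> lt a b \/ a = b.
      move=> a Aa; case: (tot a b) => [h|[h|h]]; [by left | by right |].
      by exfalso; apply: nb; exists a.
    have /countable_injP [h hinj] := segc b.
    apply/countable_injP.
    exists (fun a => if pselect (a = b) is left _ then 0 else (h a).+1).
    move=> a1 a2; rewrite !in_setE => /sub A1 /sub A2.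
    case: pselect => [->|n1]; case: pselect => [->|n2] //.
    move=> [] /hinj; rewrite !in_setE; apply.
      by case: A1.
    by case: A2.
  have [i0 _] := unb (fun _ => 0).
  have [a0 [[p0 [Pp0 Fp0]] _]] := big i0.
  have [s0 [a1 [e0 Ts _ _]]] := HF p0 Pp0.
  move: e0; rewrite Fp0 => -[es _]; subst s0.
  have pT' := subtree_perfect pT Ts.
  have [b nb] := unb (hT (subtree_at T s)); apply: nb.
  have [a [[p [Pp Fp]] lba]] := big b.
  have [s1 [a2 [e1 _ sub Ma]]] := HF p Pp.
  move: e1; rewrite Fp => -[es ea]; subst s1 a2.
  have [pS _] := pi p.2 (ex_intro _ a Ma).
  apply: le_star_trans (incr _ _ lba) _.
  apply: le_star_pt (pii _ _ Ma) _.
  exact: hT_bound pT' pS sub.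

have [H HH] := choice (fun s => elimT (countable_injP (A s)) (cA s)).
apply/countable_injP.
exists (fun p => if F p is Some (s, a) then pickle (s, H s a) else 0).
move=> [x S] [x' S']; rewrite !in_setE => Pp Pq.
have [s [a [Fp Ts subp Ma]]] := HF _ Pp.
have [s' [a' [Fq _ subq Ma']]] := HF _ Pq.
rewrite Fp Fq => /(pcan_inj pickleK) [es eh]; subst s'.
have ea : a = a'.
  by apply: (HH s) => //; rewrite in_setE; [exists (x, S) | exists (x', S')].
subst a'.
have pT' := subtree_perfect pT Ts.
case: Pp => Gx _ _; case: Pq => Gx' _ _.
case: (pselect (S = S')) => [eS|nS].
  subst S'; congr pair.
  have [_ sk] := pi S (ex_intro _ a Ma).
  exact: skew_unique pT' sk (shift_sub subp) (shift_sub subq).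
exfalso; apply: (piii a S S' Ma Ma' nS (cadd x x') (Gadd _ _ Gx Gx')).
exact: compat pT' subp subq.
Qed.
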